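(* Let $a>0$, $\alpha\in[0,1)$ and $f\in\mathcal C_a$. For every $x\in(x_\alpha^-,a)$ we have $\mathrm{Sh}_\alpha(f)(x)<f(x)$ if and only if $x\in(u_\alpha,a)$. Moreover, the point of abscissa $u_\alpha$ is the unique intersection point of the graphs of $\mathrm{Sh}_\alpha(f)$ and $f$ with abscissa in $(x_\alpha^-,a)$.
   Context: $\mathcal C_a$ is the set of $C^1$ functions $f:\mathbb R\to\mathbb R$ that are even, satisfy $f(s)=|s|$ for $|s|\ge a$ and are strictly convex on $[-a,a]$. For $f\in\mathcal C_a$: $F_\alpha(s)=f(s)-\alpha s$, $x_\alpha^+=(f')^{-1}(\alpha)\in[0,a)$ (inverse of $f':[-a,a]\to[-1,1]$); $F_\alpha$ decreases on $(-\infty,x_\alpha^+]$ and increases on $[x_\alpha^+,\infty)$. Let $F_\alpha^{-1}$ be the inverse of $F_\alpha|_{[x_\alpha^+,\infty)}$ and $\phi=F_\alpha^{-1}\circ F_\alpha$; $\phi$ is a decreasing bijection $(-\infty,x_\alpha^+]\to[x_\alpha^+,\infty)$ and $x_\alpha^-<x_\alpha^+$ is the unique point with $\phi(x_\alpha^-)=a$. Let $\delta_x=(1-\alpha)^{-1}F_\alpha(x)-\phi(x)$, $s_\alpha=x_\alpha^++\delta_{x_\alpha^+}$; $x\mapsto x+\delta_x$ is an increasing bijection $(-\infty,x_\alpha^+]\to(-\infty,s_\alpha]$ with inverse $\tau$. Define $\mathrm{Sh}_\alpha(f)(x)=\alpha x+F_\alpha(\tau(x))$ for $x\le s_\alpha$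 and $=x$ for $x>s_\alpha$. Finally $u_\alpha$ denotes the unique element of $(x_\alpha^-,s_\alpha)$ such that $\phi(\tau(u_\alpha))=u_\alpha$. *)

(* Defs.v *)
From Stdlib Require Import Reals Lra ClassicalEpsilon.
Open Scope R_scope.

Definition the_real (P : R -> Prop) : R := epsilon (inhabits 0) P.

Definition C1 (f : R -> R) : Prop :=
  exists f' : R -> R, (forall x, derivable_pt_lim f x (f' x)) /\ continuity f'.

Definition strictly_convex_on (f : R -> R) (lo hi : R) : Prop :=
  forall x y t, lo <= x -> x < y -> y <= hi -> 0 < t < 1 ->
    f (t * x + (1 - t) * y) < t * f x + (1 - t) * f y.

Definition Ca (a : R) (f : R -> R) : Prop :=
  C1 f /\ (forall s, f (- s) = f s) /\
  (forall s, a <= Rabs s -> f s = Rabs s) /\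
  strictly_convex_on f (- a) a.

Definition Falpha (f : R -> R) (alpha s : R) : R := f s - alpha * s.

Definition xplus (a : R) (f : R -> R) (alpha : R) : R :=
  the_real (fun x => - a <= x <= a /\ derivable_pt_lim f x alpha).

Definition Finv (a : R) (f : R -> R) (alpha y : R) : R :=
  the_real (fun z => xplus a f alpha <= z /\ Falpha f alpha z = y).

Definition phi (a : R) (f : R -> R) (alpha x : R) : R :=
  Finv a f alpha (Falpha f alpha x).

Definition xminus (a : R) (f : R -> R) (alpha : R) : R :=
  the_real (fun x => x < xplus a f alpha /\ phi a f alpha x = a).

Definition delta (a : R) (f : R -> R) (alpha x : R) : R :=
  Falpha f alpha x / (1 - alpha) - phi a f alpha x.

Definition salpha (a : R) (f : R -> R) (alpha : R) : R :=
  xplus a f alpha + delta a f alpha (xplus a f alpha).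

Definition tau (a : R) (f : R -> R) (alpha y : R) : R :=
  the_real (fun x => x <= xplus a f alpha /\ x + delta a f alpha x = y).

Definition Sh (a : R) (f : R -> R) (alpha x : R) : R :=
  if Rle_dec x (salpha a f alpha)
  then alpha * x + Falpha f alpha (tau a f alpha x)
  else x.

Definition ualpha (a : R) (f : R -> R) (alpha : R) : R :=
  the_real (fun u => xminus a f alpha < u < salpha a f alpha /\
                     phi a f alpha (tau a f alpha u) = u).

(* Main.v *)
Require Import Defs.
From Stdlib Require Import Reals Lra ClassicalEpsilon.
Open Scope R_scope.

Lemma the_real_spec (P : R -> Prop) : (exists x, P x) -> P (the_real P).
Proof. intro H. unfold the_real. apply epsilon_spec. exact H. Qed.

Lemma the_real_eq (P : R -> Prop) x : P x -> (forall y, P y -> y = x) -> the_real P = x.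
Proof. intros Hx Hu. apply Hu. apply the_real_spec. exists x; exact Hx. Qed.

Lemma cont_helper (g : R -> R) x :
  (forall eps, 0 < eps -> exists d, 0 < d /\ forall y, Rabs (y - x) < d -> Rabs (g y - g x) < eps) ->
  continuity_pt g x.
Proof.
  intros H eps Heps. destruct (H eps Heps) as [d [Hd Hy]].
  exists d; split; [lra|]. intros y [_ Hy']. simpl in *. unfold R_dist in *. apply Hy; exact Hy'.
Qed.

Lemma IVT_le (g : R -> R) x y c : continuity g -> x <= y -> g x <= c -> c <= g y ->
  exists z, x <= z <= y /\ g z = c.
Proof.
  intros Hc Hxy H1 H2.
  destruct (IVT_cor (fun t => g t - c) x y) as [z [Hz Hz']].
  - apply continuity_minus; [exact Hc| apply continuity_const; intros ? ?; reflexivity].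
  - exact Hxy.
  - assert (g x - c <= 0) by lra. assert (0 <= g y - c) by lra.
    replace ((g x - c) * (g y - c)) with (- ((c - g x) * (g y - c))) by ring.
    assert (0 <= (c - g x) * (g y - c)) by (apply Rmult_le_pos; lra). lra.
  - exists z; split; [exact Hz| lra].
Qed.

Lemma IVT_ge (g : R -> R) x y c : continuity g -> x <= y -> c <= g x -> g y <= c ->
  exists z, x <= z <= y /\ g z = c.
Proof.
  intros Hc Hxy H1 H2.
  destruct (IVT_le (fun t => - g t) x y (- c)) as [z [Hz Hz']]; try lra.
  - apply continuity_opp; exact Hc.
  - exists z; split; [exact Hz| lra].
Qed.

Lemma Rabs_le_lip_min y x p : Rabs (Rmin y p - Rmin x p) <= Rabs (y - x).
Proof.
  unfold Rmin; destruct (Rle_dec y p); destruct (Rle_dec x p);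
  unfold Rabs; repeat match goal with |- context [Rcase_abs ?t] => destruct (Rcase_abs t) end; lra.
Qed.

Lemma cont_min p : continuity (fun y => Rmin y p).
Proof.
  intro x. apply cont_helper. intros eps He. exists eps; split; [lra|].
  intros y Hy. pose proof (Rabs_le_lip_min y x p). lra.
Qed.

Definition Hyp (a alpha : R) (f f' : R -> R) : Prop :=
  0 < a /\ 0 <= alpha < 1 /\ (forall x, derivable_pt_lim f x (f' x)) /\ continuity f' /\
  (forall s, a <= Rabs s -> f s = Rabs s) /\ strictly_convex_on f (- a) a.

Ltac hyp H := destruct H as (Ha & Hal & Hd & Hc & Hout & Hconv).

Lemma fd_right a alpha f f' (H : Hyp a alpha f f') s : a < s -> f' s = 1.
Proof.
  hyp H. intro Hs. apply (uniqueness_limite f s); [apply Hd|].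
  intros eps He. exists (mkposreal (s - a) ltac:(lra)). simpl. intros h Hh Hh'.
  assert (Hh2 : - (s - a) < h < s - a) by (unfold Rabs in Hh'; destruct (Rcase_abs h); lra).
  rewrite (Hout (s+h)), (Hout s); rewrite ?(Rabs_right s), ?(Rabs_right (s+h)); try lra.
  replace ((s + h - s) / h - 1) with 0 by (field; exact Hh). rewrite Rabs_R0; lra.
Qed.

Lemma fd_left a alpha f f' (H : Hyp a alpha f f') s : s < - a -> f' s = -1.
Proof.
  hyp H. intro Hs. apply (uniqueness_limite f s); [apply Hd|].
  intros eps He. exists (mkposreal (- a - s) ltac:(lra)). simpl. intros h Hh Hh'.
  assert (Hh2 : - (- a - s) < h < - a - s) by (unfold Rabs in Hh'; destruct (Rcase_abs h); lra).
  rewrite (Hout (s+h)), (Hout s); rewrite ?(Rabs_left s), ?(Rabs_left (s+h)); try lra.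
  replace ((- (s + h) - - s) / h - -1) with 0 by (field; exact Hh). rewrite Rabs_R0; lra.
Qed.

Lemma fd_a a alpha f f' (H : Hyp a alpha f f') : f' a = 1.
Proof.
  pose proof (fd_right a alpha f f' H) as Hr. hyp H.
  destruct (Req_dec (f' a) 1) as [E|E]; [exact E|exfalso].
  destruct (Hc a (Rabs (f' a - 1)) ltac:(apply Rabs_pos_lt; lra)) as [d [Hdp Hd']].
  assert (Hx := Hd' (a + d/2)). simpl in Hx. unfold R_dist, D_x, no_cond in Hx.
  rewrite Hr in Hx by lra.
  assert (Rabs (1 - f' a) < Rabs (f' a - 1)).
  { apply Hx. split; [split; [exact I|lra]|].
    replace (a + d/2 - a) with (d/2) by ring. rewrite Rabs_right; lra. }
  rewrite <- Rabs_Ropp in H. replace (- (1 - f' a)) with (f' a - 1) in H by ring. lra.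
Qed.

Lemma slope_right a alpha f f' (H : Hyp a alpha f f') x m :
  - a <= x -> x < m -> m <= a -> f' x <= (f m - f x) / (m - x).
Proof.
  hyp H. intros H1 H2 H3.
  set (S := (f m - f x) / (m - x)).
  assert (HS : f m - f x = S * (m - x)) by (unfold S; field; lra).
  destruct (Rle_dec (f' x) S) as [L|L]; [exact L|exfalso].
  destruct (Hd x (f' x - S) ltac:(lra)) as [[d Hdp] Hdd]. simpl in Hdd.
  set (h := Rmin (d/2) ((m - x)/2)).
  assert (Hh1 : 0 < h) by (unfold h; apply Rmin_pos; lra).
  assert (Hh2 : h <= d/2) by apply Rmin_l.
  assert (Hh3 : h <= (m-x)/2) by apply Rmin_r.
  assert (Hq := Hdd h ltac:(lra) ltac:(rewrite Rabs_right; lra)).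
  set (q := (f (x + h) - f x) / h) in Hq.
  assert (Hqd : f (x + h) - f x = q * h) by (unfold q; field; lra).
  set (t := h / (m - x)).
  assert (Ht : t * (m - x) = h) by (unfold t; field; lra).
  assert (Ht0 : 0 < t) by (unfold t; apply Rdiv_lt_0_compat; lra).
  assert (Ht1 : t < 1) by nra.
  assert (Hcv := Hconv x m (1 - t) H1 H2 H3 ltac:(lra)).
  replace ((1 - t) * x + (1 - (1 - t)) * m) with (x + h) in Hcv by nra.
  assert (q * h < S * h) by nra.
  assert (q < S) by nra.
  apply Rabs_def2 in Hq. lra.
Qed.

Lemma slope_left a alpha f f' (H : Hyp a alpha f f') m y :
  - a <= m -> m < y -> y <= a -> (f y - f m) / (y - m) <= f' y.
Proof.
  hyp H. intros H1 H2 H3.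
  set (S := (f y - f m) / (y - m)).
  assert (HS : f y - f m = S * (y - m)) by (unfold S; field; lra).
  destruct (Rle_dec S (f' y)) as [L|L]; [exact L|exfalso].
  destruct (Hd y (S - f' y) ltac:(lra)) as [[d Hdp] Hdd]. simpl in Hdd.
  set (h := - Rmin (d/2) ((y - m)/2)).
  assert (Hh1 : 0 < - h) by (unfold h; rewrite Ropp_involutive; apply Rmin_pos; lra).
  assert (Hh2 : - h <= d/2) by (unfold h; rewrite Ropp_involutive; apply Rmin_l).
  assert (Hh3 : - h <= (y-m)/2) by (unfold h; rewrite Ropp_involutive; apply Rmin_r).
  assert (Hq := Hdd h ltac:(lra) ltac:(rewrite Rabs_left; lra)).
  set (q := (f (y + h) - f y) / h) in Hq.
  assert (Hqd : f (y + h) - f y = q * h) by (unfold q; field; lra).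
  set (t := - h / (y - m)).
  assert (Ht : t * (y - m) = - h) by (unfold t; field; lra).
  assert (Ht0 : 0 < t) by (unfold t; apply Rdiv_lt_0_compat; lra).
  assert (Ht1 : t < 1) by nra.
  assert (Hcv := Hconv m y t H1 H2 H3 ltac:(lra)).
  replace (t * m + (1 - t) * y) with (y + h) in Hcv by nra.
  assert (q * h < S * h) by nra.
  assert (S < q) by nra.
  apply Rabs_def2 in Hq. lra.
Qed.

Lemma fd_strict a alpha f f' (H : Hyp a alpha f f') x y :
  - a <= x -> x < y -> y <= a -> f' x < f' y.
Proof.
  intros H1 H2 H3. set (m := (x + y) / 2).
  assert (A := slope_right a alpha f f' H x m H1 ltac:(unfold m; lra) ltac:(unfold m; lra)).
  assert (B := slope_left a alpha f f' H m y ltac:(unfold m; lra) ltac:(unfold m; lra) H3).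
  hyp H.
  assert (C := Hconv x y (1/2) H1 H2 H3 ltac:(lra)).
  replace (1 / 2 * x + (1 - 1 / 2) * y) with m in C by (unfold m; field).
  assert (E1 : (f m - f x) / (m - x) = (f m - f x) * (2 / (y - x))) by (unfold m; field; lra).
  assert (E2 : (f y - f m) / (y - m) = (f y - f m) * (2 / (y - x))) by (unfold m; field; lra).
  assert (0 < 2 / (y - x)) by (apply Rdiv_lt_0_compat; lra).
  assert ((f m - f x) * (2 / (y - x)) < (f y - f m) * (2 / (y - x))) by (apply Rmult_lt_compat_r; lra).
  lra.
Qed.

Lemma fd_lt1 a alpha f f' (H : Hyp a alpha f f') s : s < a -> f' s < 1.
Proof.
  intro Hs. pose proof (fd_a _ _ _ _ H) as Ea.
  destruct (Rlt_le_dec s (- a)) as [L|L].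
  - rewrite (fd_left _ _ _ _ H s L); lra.
  - rewrite <- Ea. apply (fd_strict _ _ _ _ H); lra.
Qed.

Lemma fd_le1 a alpha f f' (H : Hyp a alpha f f') s : f' s <= 1.
Proof.
  destruct (Rlt_le_dec s a) as [L|L].
  - left; apply (fd_lt1 _ _ _ _ H s L).
  - destruct L as [L|L]. rewrite (fd_right _ _ _ _ H s L); lra. subst; rewrite (fd_a _ _ _ _ H); lra.
Qed.

Lemma xp_spec a alpha f f' (H : Hyp a alpha f f') :
  - a <= xplus a f alpha < a /\ f' (xplus a f alpha) = alpha.
Proof.
  pose proof (fd_right _ _ _ _ H) as Hr. pose proof (fd_left _ _ _ _ H) as Hl.
  pose proof (fd_a _ _ _ _ H) as Ea.
  pose proof H as H0. hyp H0.
  assert (Ex : exists x, - a <= x <= a /\ derivable_pt_lim f x alpha).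
  { destruct (IVT_le f' (-a-1) (a+1) alpha Hc ltac:(lra)) as [z [Hz Hfz]].
    - rewrite Hl; lra.
    - rewrite Hr; lra.
    - exists z. assert (- a <= z <= a).
      { destruct (Rlt_le_dec z (-a)) as [L|L]; [rewrite Hl in Hfz; lra|].
        destruct (Rle_lt_dec z a) as [L'|L']; [lra|]. rewrite Hr in Hfz; lra. }
      split; [lra|]. rewrite <- Hfz. apply Hd. }
  pose proof (the_real_spec _ Ex) as [Hb Hder]. fold (xplus a f alpha) in Hb, Hder.
  assert (E : f' (xplus a f alpha) = alpha) by (apply (uniqueness_limite f (xplus a f alpha)); auto).
  split; [|exact E]. split; [lra|].
  destruct Hb as [_ [Hb|Hb]]; [exact Hb|]. rewrite Hb, Ea in E. lra.
Qed.

Lemma fd_below a alpha f f' (H : Hyp a alpha f f') c : c < xplus a f alpha -> f' c < alpha.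
Proof.
  intro Hc. destruct (xp_spec _ _ _ _ H) as [Hb E].
  destruct (Rlt_le_dec c (-a)) as [L|L].
  - rewrite (fd_left _ _ _ _ H c L). destruct H as (_&?&_); lra.
  - rewrite <- E. apply (fd_strict _ _ _ _ H); lra.
Qed.

Lemma fd_above a alpha f f' (H : Hyp a alpha f f') c : xplus a f alpha < c -> alpha < f' c.
Proof.
  intro Hc. destruct (xp_spec _ _ _ _ H) as [Hb E].
  destruct (Rle_lt_dec c a) as [L|L].
  - rewrite <- E. apply (fd_strict _ _ _ _ H); lra.
  - rewrite (fd_right _ _ _ _ H c L). destruct H as (_&?&_); lra.
Qed.

Lemma F_der a alpha f f' (H : Hyp a alpha f f') x :
  derivable_pt_lim (Falpha f alpha) x (f' x - alpha).
Proof.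
  hyp H.
  assert (E : Falpha f alpha = (f - mult_real_fct alpha id)%F).
  { unfold Falpha, mult_real_fct, minus_fct, id. reflexivity. }
  rewrite E. replace (f' x - alpha) with (f' x - alpha * 1) by ring.
  apply derivable_pt_lim_minus; [apply Hd|]. apply derivable_pt_lim_scal, derivable_pt_lim_id.
Qed.

Lemma F_cont a alpha f f' (H : Hyp a alpha f f') : continuity (Falpha f alpha).
Proof.
  intro x. apply derivable_continuous_pt. exists (f' x - alpha). apply (F_der _ _ _ _ H).
Qed.

Lemma F_mvt a alpha f f' (H : Hyp a alpha f f') x y : x < y ->
  exists c, Falpha f alpha y - Falpha f alpha x = (f' c - alpha) * (y - x) /\ x < c < y.
Proof.
  intro Hxy. apply (MVT_cor2 (Falpha f alpha) (fun c => f' c - alpha)); [exact Hxy|].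
  intros c _. apply (F_der _ _ _ _ H).
Qed.

Lemma F_dec a alpha f f' (H : Hyp a alpha f f') y1 y2 :
  y1 < y2 -> y2 <= xplus a f alpha -> Falpha f alpha y2 < Falpha f alpha y1.
Proof.
  intros H1 H2. destruct (F_mvt _ _ _ _ H y1 y2 H1) as [c [E Hc0]].
  assert (f' c < alpha) by (apply (fd_below _ _ _ _ H); lra).
  assert ((f' c - alpha) * (y2 - y1) < 0) by (apply Rmult_neg_pos; lra). lra.
Qed.

Lemma F_inc a alpha f f' (H : Hyp a alpha f f') y1 y2 :
  xplus a f alpha <= y1 -> y1 < y2 -> Falpha f alpha y1 < Falpha f alpha y2.
Proof.
  intros H1 H2. destruct (F_mvt _ _ _ _ H y1 y2 H2) as [c [E Hc0]].
  assert (alpha < f' c) by (apply (fd_above _ _ _ _ H); lra).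
  assert (0 < (f' c - alpha) * (y2 - y1)) by (apply Rmult_lt_0_compat; lra). lra.
Qed.

Lemma F_lip a alpha f f' (H : Hyp a alpha f f') z2 z1 :
  z2 < z1 -> Falpha f alpha z1 - Falpha f alpha z2 <= (1 - alpha) * (z1 - z2).
Proof.
  intros H1. destruct (F_mvt _ _ _ _ H z2 z1 H1) as [c [E Hc0]].
  pose proof (fd_le1 _ _ _ _ H c). rewrite E. apply Rmult_le_compat_r; lra.
Qed.

Lemma f_gt a alpha f f' (H : Hyp a alpha f f') z : z < a -> z < f z.
Proof.
  intro Hz.
  destruct (MVT_cor2 (fun s => f s - s) (fun s => f' s - 1) z a Hz) as [c [E Hc0]].
  - intros c _. apply derivable_pt_lim_minus. destruct H as (_&_&Hd&_); apply Hd.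
    apply derivable_pt_lim_id.
  - pose proof (fd_lt1 _ _ _ _ H c ltac:(lra)).
    assert ((f' c - 1) * (a - z) < 0) by (apply Rmult_neg_pos; lra).
    hyp H. rewrite (Hout a) in E by (rewrite Rabs_right; lra). rewrite Rabs_right in E by lra. lra.
Qed.

Lemma F_gt a alpha f f' (H : Hyp a alpha f f') z : z < a -> (1 - alpha) * z < Falpha f alpha z.
Proof. intro Hz. pose proof (f_gt _ _ _ _ H z Hz). unfold Falpha. lra. Qed.

Lemma F_eq a alpha f f' (H : Hyp a alpha f f') z : a <= z -> Falpha f alpha z = (1 - alpha) * z.
Proof. intro Hz. hyp H. unfold Falpha. rewrite Hout; rewrite Rabs_right; lra. Qed.

Lemma F_left a alpha f f' (H : Hyp a alpha f f') z : z <= - a -> Falpha f alpha z = - (1 + alpha) * z.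
Proof. intro Hz. hyp H. unfold Falpha. rewrite Hout; rewrite Rabs_left1; lra. Qed.

Lemma dec_onto_cont (g : R -> R) p :
  (forall y1 y2, y1 < y2 -> y2 <= p -> g y2 < g y1) ->
  (forall z, g p <= z -> exists y, y <= p /\ g y = z) ->
  continuity (fun y => g (Rmin y p)).
Proof.
  intros Hdec Hon.
  assert (Hle : forall y1 y2, y1 <= y2 -> y2 <= p -> g y2 <= g y1).
  { intros y1 y2 [L|L] L2; [left; apply Hdec; auto| subst; lra]. }
  intro y0. apply cont_helper. intros eps He.
  destruct (Rle_lt_dec y0 p) as [Hy0|Hy0].
  2:{ exists (y0 - p). split; [lra|]. intros y Hy.
      assert (y > p) by (apply Rabs_def2 in Hy; lra).
      rewrite !Rmin_right by lra. rewrite Rminus_diag, Rabs_R0. exact He. }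
  rewrite (Rmin_left y0 p Hy0). set (g0 := g y0).
  assert (Hgp : g p <= g0) by (apply Hle; lra).
  destruct (Hon (g0 + eps/2) ltac:(lra)) as [ylo [Hylo Hglo]].
  assert (Hylo2 : ylo < y0).
  { destruct (Rlt_le_dec ylo y0) as [L|L]; [exact L|].
    pose proof (Hle y0 ylo L Hylo). unfold g0 in *; lra. }
  assert (Lower : forall y, y <= y0 -> ylo < y -> Rabs (g (Rmin y p) - g0) < eps).
  { intros y H1 H2. rewrite Rmin_left by lra.
    assert (g y < g ylo) by (apply Hdec; lra).
    assert (g0 <= g y) by (apply Hle; lra).
    apply Rabs_def1; lra. }
  destruct (Rle_dec (g p) (g0 - eps/2)) as [Lp|Lp].
  - destruct (Hon (g0 - eps/2) Lp) as [yhi [Hyhi Hghi]].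
    assert (Hyhi2 : y0 < yhi).
    { destruct (Rlt_le_dec y0 yhi) as [L|L]; [exact L|].
      pose proof (Hle yhi y0 L Hy0). unfold g0 in *; lra. }
    exists (Rmin (y0 - ylo) (yhi - y0)). split; [apply Rmin_pos; lra|].
    intros y Hy. apply Rabs_def2 in Hy.
    pose proof (Rmin_l (y0 - ylo) (yhi - y0)). pose proof (Rmin_r (y0 - ylo) (yhi - y0)).
    destruct (Rle_lt_dec y y0) as [L|L]; [apply Lower; lra|].
    rewrite Rmin_left by lra.
    assert (g y < g0) by (apply Hdec; lra).
    assert (g yhi < g y) by (apply Hdec; lra).
    apply Rabs_def1; lra.
  - exists (y0 - ylo). split; [lra|].
    intros y Hy. apply Rabs_def2 in Hy.
    destruct (Rle_lt_dec y y0) as [L|L]; [apply Lower; lra|].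
    assert (Hm1 : y0 <= Rmin y p) by (apply Rmin_glb; lra).
    assert (Hm2 : Rmin y p <= p) by apply Rmin_r.
    assert (g (Rmin y p) <= g0) by (apply Hle; lra).
    assert (g p <= g (Rmin y p)) by (apply Hle; lra).
    apply Rabs_def1; lra.
Qed.


Lemma F_min a alpha f f' (H : Hyp a alpha f f') y :
  Falpha f alpha (xplus a f alpha) <= Falpha f alpha y.
Proof.
  destruct (Rtotal_order y (xplus a f alpha)) as [L|[L|L]].
  - left; apply (F_dec _ _ _ _ H); lra.
  - subst; lra.
  - left; apply (F_inc _ _ _ _ H); lra.
Qed.

Lemma right_inj a alpha f f' (H : Hyp a alpha f f') z1 z2 :
  xplus a f alpha <= z1 -> xplus a f alpha <= z2 -> Falpha f alpha z1 = Falpha f alpha z2 -> z1 = z2.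
Proof.
  intros H1 H2 E. destruct (Rtotal_order z1 z2) as [L|[L|L]]; auto.
  - pose proof (F_inc _ _ _ _ H z1 z2 H1 L); lra.
  - pose proof (F_inc _ _ _ _ H z2 z1 H2 L); lra.
Qed.

Lemma left_inj a alpha f f' (H : Hyp a alpha f f') z1 z2 :
  z1 <= xplus a f alpha -> z2 <= xplus a f alpha -> Falpha f alpha z1 = Falpha f alpha z2 -> z1 = z2.
Proof.
  intros H1 H2 E. destruct (Rtotal_order z1 z2) as [L|[L|L]]; auto.
  - pose proof (F_dec _ _ _ _ H z1 z2 L H2); lra.
  - pose proof (F_dec _ _ _ _ H z2 z1 L H1); lra.
Qed.

Lemma right_pre a alpha f f' (H : Hyp a alpha f f') c :
  Falpha f alpha (xplus a f alpha) <= c -> exists z, xplus a f alpha <= z /\ Falpha f alpha z = c.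
Proof.
  intro Hcc. pose proof (xp_spec _ _ _ _ H) as [Hx _]. pose proof H as H0. hyp H0.
  set (M := a + Rabs c / (1 - alpha)).
  assert (0 <= Rabs c / (1 - alpha)) by (unfold Rdiv; apply Rmult_le_pos; [apply Rabs_pos|left; apply Rinv_0_lt_compat; lra]).
  assert (EM : Falpha f alpha M = (1 - alpha) * a + Rabs c).
  { rewrite (F_eq _ _ _ _ H) by (unfold M; lra). unfold M. field. lra. }
  pose proof (Rle_abs c).
  destruct (IVT_le (Falpha f alpha) (xplus a f alpha) M c (F_cont _ _ _ _ H)) as [z [Hz E]].
  - unfold M; lra.
  - exact Hcc.
  - rewrite EM. assert (0 <= (1 - alpha) * a) by (apply Rmult_le_pos; lra). lra.
  - exists z; split; [lra|exact E].
Qed.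

Lemma left_pre a alpha f f' (H : Hyp a alpha f f') c :
  Falpha f alpha (xplus a f alpha) <= c -> exists y, y <= xplus a f alpha /\ Falpha f alpha y = c.
Proof.
  intro Hcc. pose proof (xp_spec _ _ _ _ H) as [Hx _]. pose proof H as H0. hyp H0.
  set (M := a + Rabs c).
  pose proof (Rle_abs c). pose proof (Rabs_pos c).
  assert (EM : Falpha f alpha (- M) = (1 + alpha) * M).
  { rewrite (F_left _ _ _ _ H) by (unfold M; lra). ring. }
  destruct (IVT_ge (Falpha f alpha) (- M) (xplus a f alpha) c (F_cont _ _ _ _ H)) as [z [Hz E]].
  - unfold M; lra.
  - rewrite EM. unfold M. nra.
  - exact Hcc.
  - exists z; split; [lra|exact E].
Qed.

Lemma Finv_spec a alpha f f' (H : Hyp a alpha f f') c :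
  Falpha f alpha (xplus a f alpha) <= c ->
  xplus a f alpha <= Finv a f alpha c /\ Falpha f alpha (Finv a f alpha c) = c.
Proof. intro Hc. unfold Finv. apply the_real_spec. apply (right_pre _ _ _ _ H c Hc). Qed.

Lemma Finv_eq a alpha f f' (H : Hyp a alpha f f') z :
  xplus a f alpha <= z -> Finv a f alpha (Falpha f alpha z) = z.
Proof.
  intro Hz. unfold Finv. apply the_real_eq; [split; auto|].
  intros y [Hy E]. apply (right_inj _ _ _ _ H); auto.
Qed.

Lemma phi_spec a alpha f f' (H : Hyp a alpha f f') y :
  xplus a f alpha <= phi a f alpha y /\ Falpha f alpha (phi a f alpha y) = Falpha f alpha y.
Proof. apply (Finv_spec _ _ _ _ H). apply (F_min _ _ _ _ H). Qed.

Lemma phi_eq a alpha f f' (H : Hyp a alpha f f') y z :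
  xplus a f alpha <= z -> Falpha f alpha y = Falpha f alpha z -> phi a f alpha y = z.
Proof. intros Hz E. unfold phi. rewrite E. apply (Finv_eq _ _ _ _ H z Hz). Qed.

Lemma phi_xp a alpha f f' (H : Hyp a alpha f f') : phi a f alpha (xplus a f alpha) = xplus a f alpha.
Proof. apply (phi_eq _ _ _ _ H); lra. Qed.

Lemma phi_dec a alpha f f' (H : Hyp a alpha f f') y1 y2 :
  y1 < y2 -> y2 <= xplus a f alpha -> phi a f alpha y2 < phi a f alpha y1.
Proof.
  intros H1 H2. pose proof (F_dec _ _ _ _ H y1 y2 H1 H2).
  destruct (phi_spec _ _ _ _ H y1) as [A1 B1]. destruct (phi_spec _ _ _ _ H y2) as [A2 B2].
  destruct (Rlt_le_dec (phi a f alpha y2) (phi a f alpha y1)) as [L|[L|L]]; auto.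
  - pose proof (F_inc _ _ _ _ H _ _ A1 L). lra.
  - rewrite L in B1. lra.
Qed.

Lemma phi_onto a alpha f f' (H : Hyp a alpha f f') z :
  phi a f alpha (xplus a f alpha) <= z -> exists y, y <= xplus a f alpha /\ phi a f alpha y = z.
Proof.
  rewrite (phi_xp _ _ _ _ H). intro Hz.
  destruct (left_pre _ _ _ _ H (Falpha f alpha z)) as [y [Hy E]].
  - apply (F_min _ _ _ _ H).
  - exists y; split; auto. apply (phi_eq _ _ _ _ H); auto.
Qed.

Lemma phi_cont a alpha f f' (H : Hyp a alpha f f') :
  continuity (fun y => phi a f alpha (Rmin y (xplus a f alpha))).
Proof.
  apply dec_onto_cont.
  - intros; apply (phi_dec _ _ _ _ H); auto.
  - apply (phi_onto _ _ _ _ H).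
Qed.

Lemma xm_spec a alpha f f' (H : Hyp a alpha f f') :
  xminus a f alpha < xplus a f alpha /\ phi a f alpha (xminus a f alpha) = a /\
  Falpha f alpha (xminus a f alpha) = Falpha f alpha a.
Proof.
  pose proof (xp_spec _ _ _ _ H) as [Hx _].
  assert (Ex : exists y, y < xplus a f alpha /\ phi a f alpha y = a).
  { destruct (left_pre _ _ _ _ H (Falpha f alpha a)) as [y [Hy E]].
    - apply (F_min _ _ _ _ H).
    - exists y. split.
      + destruct Hy as [Hy|Hy]; auto. subst y.
        pose proof (F_inc _ _ _ _ H (xplus a f alpha) a ltac:(lra) ltac:(lra)). lra.
      + apply (phi_eq _ _ _ _ H); lra. }
  pose proof (the_real_spec _ Ex) as [A B]. fold (xminus a f alpha) in A, B.
  split; [exact A|]. split; [exact B|].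
  destruct (phi_spec _ _ _ _ H (xminus a f alpha)) as [_ E]. rewrite B in E. lra.
Qed.

Lemma phi_lt_a a alpha f f' (H : Hyp a alpha f f') y :
  xminus a f alpha < y -> y <= xplus a f alpha -> phi a f alpha y < a.
Proof.
  intros H1 H2. destruct (xm_spec _ _ _ _ H) as [_ [E _]].
  pose proof (phi_dec _ _ _ _ H _ _ H1 H2). lra.
Qed.

Definition Dm a f alpha y := y + delta a f alpha y.

Lemma div_k k c w : 0 < k -> c = k * w -> c / k = w.
Proof. intros Hk E. subst. field. lra. Qed.

Lemma D_inc a alpha f f' (H : Hyp a alpha f f') y1 y2 :
  y1 < y2 -> y2 <= xplus a f alpha -> Dm a f alpha y1 < Dm a f alpha y2.
Proof.
  intros H1 H2. pose proof H as H0. hyp H0.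
  pose proof (phi_dec _ _ _ _ H y1 y2 H1 H2) as H3.
  destruct (phi_spec _ _ _ _ H y1) as [A1 B1]. destruct (phi_spec _ _ _ _ H y2) as [A2 B2].
  pose proof (F_lip _ _ _ _ H _ _ H3).
  unfold Dm, delta.
  set (w1 := Falpha f alpha y1 / (1 - alpha)). set (w2 := Falpha f alpha y2 / (1 - alpha)).
  assert (E1 : Falpha f alpha y1 = (1 - alpha) * w1) by (unfold w1; field; lra).
  assert (E2 : Falpha f alpha y2 = (1 - alpha) * w2) by (unfold w2; field; lra).
  assert (w1 - w2 <= phi a f alpha y1 - phi a f alpha y2).
  { apply (Rmult_le_reg_l (1 - alpha)); [lra|]. nra. }
  lra.
Qed.

Lemma D_xm a alpha f f' (H : Hyp a alpha f f') : Dm a f alpha (xminus a f alpha) = xminus a f alpha.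
Proof.
  pose proof H as H0. hyp H0. destruct (xm_spec _ _ _ _ H) as [_ [E1 E2]].
  unfold Dm, delta. rewrite E1, E2, (F_eq _ _ _ _ H a) by lra.
  rewrite (div_k (1 - alpha) _ a) by lra. ring.
Qed.

Lemma s_prop a alpha f f' (H : Hyp a alpha f f') :
  Dm a f alpha (xplus a f alpha) = salpha a f alpha /\
  xplus a f alpha < salpha a f alpha < a.
Proof.
  pose proof H as H0. hyp H0. destruct (xp_spec _ _ _ _ H) as [Hx _].
  split; [reflexivity|]. unfold salpha, delta. rewrite (phi_xp _ _ _ _ H).
  pose proof (F_gt _ _ _ _ H (xplus a f alpha) ltac:(lra)).
  pose proof (F_inc _ _ _ _ H (xplus a f alpha) a ltac:(lra) ltac:(lra)).
  rewrite (F_eq _ _ _ _ H a) in H1 by lra.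
  set (w := Falpha f alpha (xplus a f alpha) / (1 - alpha)).
  assert (E : Falpha f alpha (xplus a f alpha) = (1 - alpha) * w) by (unfold w; field; lra).
  rewrite E in H0, H1. split.
  - assert (xplus a f alpha < w) by (apply (Rmult_lt_reg_l (1 - alpha)); lra). lra.
  - assert (w < a) by (apply (Rmult_lt_reg_l (1 - alpha)); lra). lra.
Qed.

Definition Gm a f alpha := (fun y => Rmin y (xplus a f alpha) +
   mult_real_fct (/ (1 - alpha)) (comp (Falpha f alpha) (fun y => Rmin y (xplus a f alpha))) y -
   phi a f alpha (Rmin y (xplus a f alpha))).

Lemma Gm_eq a f alpha y : y <= xplus a f alpha -> Gm a f alpha y = Dm a f alpha y.
Proof.
  intro Hy. unfold Gm, Dm, delta, mult_real_fct, comp. rewrite Rmin_left by exact Hy.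
  unfold Rdiv. ring.
Qed.

Lemma Gm_cont a alpha f f' (H : Hyp a alpha f f') : continuity (Gm a f alpha).
Proof.
  pose proof (phi_cont _ _ _ _ H) as Hp. pose proof (cont_min (xplus a f alpha)) as Hm.
  pose proof (F_cont _ _ _ _ H) as HF.
  intro x. unfold Gm.
  apply (continuity_pt_minus (fun y => Rmin y (xplus a f alpha) +
   mult_real_fct (/ (1 - alpha)) (comp (Falpha f alpha) (fun y => Rmin y (xplus a f alpha))) y)
   (fun y => phi a f alpha (Rmin y (xplus a f alpha)))); [|apply Hp].
  apply (continuity_pt_plus (fun y => Rmin y (xplus a f alpha))); [apply Hm|].
  apply continuity_pt_scal. apply continuity_pt_comp; [apply Hm| apply HF].
Qed.

Lemma D_onto a alpha f f' (H : Hyp a alpha f f') x :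
  xminus a f alpha <= x -> x <= salpha a f alpha ->
  exists y, xminus a f alpha <= y <= xplus a f alpha /\ Dm a f alpha y = x.
Proof.
  intros H1 H2. destruct (xm_spec _ _ _ _ H) as [Hm _]. destruct (s_prop _ _ _ _ H) as [Es _].
  destruct (IVT_le (Gm a f alpha) (xminus a f alpha) (xplus a f alpha) x (Gm_cont _ _ _ _ H))
    as [y [Hy E]].
  - lra.
  - rewrite Gm_eq by lra. rewrite (D_xm _ _ _ _ H). exact H1.
  - rewrite Gm_eq by lra. rewrite Es. exact H2.
  - exists y. split; [exact Hy|]. rewrite <- Gm_eq by lra. exact E.
Qed.

Lemma tau_eq a alpha f f' (H : Hyp a alpha f f') y :
  y <= xplus a f alpha -> tau a f alpha (Dm a f alpha y) = y.
Proof.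
  intro Hy. unfold tau. apply the_real_eq; [split; [exact Hy| reflexivity]|].
  intros y' [Hy' E]. fold (Dm a f alpha y') in E.
  destruct (Rtotal_order y' y) as [L|[L|L]]; auto.
  - pose proof (D_inc _ _ _ _ H _ _ L Hy). lra.
  - pose proof (D_inc _ _ _ _ H _ _ L Hy'). lra.
Qed.

Lemma tau_spec a alpha f f' (H : Hyp a alpha f f') x :
  xminus a f alpha <= x -> x <= salpha a f alpha ->
  xminus a f alpha <= tau a f alpha x <= xplus a f alpha /\ Dm a f alpha (tau a f alpha x) = x.
Proof.
  intros H1 H2. destruct (D_onto _ _ _ _ H x H1 H2) as [y [Hy E]].
  subst x. rewrite (tau_eq _ _ _ _ H y) by lra. auto.
Qed.

Lemma tau_gt a alpha f f' (H : Hyp a alpha f f') x :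
  xminus a f alpha < x -> x <= salpha a f alpha -> xminus a f alpha < tau a f alpha x.
Proof.
  intros H1 H2. destruct (tau_spec _ _ _ _ H x ltac:(lra) H2) as [[A B] C].
  destruct A as [A|A]; auto. rewrite <- A, (D_xm _ _ _ _ H) in C. lra.
Qed.

Lemma tau_mono a alpha f f' (H : Hyp a alpha f f') x1 x2 :
  xminus a f alpha <= x1 -> x1 < x2 -> x2 <= salpha a f alpha ->
  tau a f alpha x1 < tau a f alpha x2.
Proof.
  intros H1 H2 H3.
  destruct (tau_spec _ _ _ _ H x1 H1 ltac:(lra)) as [[A1 B1] C1].
  destruct (tau_spec _ _ _ _ H x2 ltac:(lra) H3) as [[A2 B2] C2].
  destruct (Rlt_le_dec (tau a f alpha x1) (tau a f alpha x2)) as [L|[L|L]]; auto.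
  - pose proof (D_inc _ _ _ _ H _ _ L B1). lra.
  - rewrite L in C2. lra.
Qed.

Lemma u_spec a alpha f f' (H : Hyp a alpha f f') :
  xminus a f alpha < ualpha a f alpha < salpha a f alpha /\
  phi a f alpha (tau a f alpha (ualpha a f alpha)) = ualpha a f alpha.
Proof.
  pose proof (xp_spec _ _ _ _ H) as [Hx _].
  destruct (xm_spec _ _ _ _ H) as [Hm [Pm Fm]]. destruct (s_prop _ _ _ _ H) as [Es Hs].
  pose proof (D_xm _ _ _ _ H) as Dxm.
  set (V := (Gm a f alpha - (fun y => phi a f alpha (Rmin y (xplus a f alpha))))%F).
  assert (HV : continuity V) by (apply continuity_minus; [apply (Gm_cont _ _ _ _ H)|apply (phi_cont _ _ _ _ H)]).
  assert (Vy : forall y, y <= xplus a f alpha -> V y = Dm a f alpha y - phi a f alpha y).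
  { intros y Hy. unfold V, minus_fct. rewrite Gm_eq by exact Hy. rewrite Rmin_left by exact Hy. reflexivity. }
  destruct (IVT_le V (xminus a f alpha) (xplus a f alpha) 0 HV) as [y [Hy E]].
  - lra.
  - rewrite Vy by lra. rewrite Dxm, Pm. lra.
  - rewrite Vy by lra. rewrite Es, (phi_xp _ _ _ _ H). lra.
  - rewrite Vy in E by lra.
    assert (Hy1 : xminus a f alpha < y).
    { destruct Hy as [[L|L] _]; auto. subst y. rewrite Dxm, Pm in E. lra. }
    assert (Hy2 : y < xplus a f alpha).
    { destruct Hy as [_ [L|L]]; auto. subst y. rewrite Es, (phi_xp _ _ _ _ H) in E. lra. }
    assert (P : xminus a f alpha < Dm a f alpha y < salpha a f alpha /\
                phi a f alpha (tau a f alpha (Dm a f alpha y)) = Dm a f alpha y).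
    { split; [split|].
      - rewrite <- Dxm. apply (D_inc _ _ _ _ H); lra.
      - rewrite <- Es. apply (D_inc _ _ _ _ H); lra.
      - rewrite (tau_eq _ _ _ _ H y) by lra. lra. }
    unfold ualpha. rewrite (the_real_eq _ (Dm a f alpha y) P); [exact P|].
    intros u' [[U1 U2] U3]. destruct P as [[P1 P2] P3].
    set (u := Dm a f alpha y) in *.
    destruct (Rtotal_order u' u) as [L|[L|L]]; auto; exfalso.
    + pose proof (tau_mono _ _ _ _ H u' u ltac:(lra) L ltac:(lra)).
      destruct (tau_spec _ _ _ _ H u ltac:(lra) ltac:(lra)) as [[_ B] _].
      pose proof (phi_dec _ _ _ _ H _ _ H0 B). lra.
    + pose proof (tau_mono _ _ _ _ H u u' ltac:(lra) L ltac:(lra)).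
      destruct (tau_spec _ _ _ _ H u' ltac:(lra) ltac:(lra)) as [[_ B] _].
      pose proof (phi_dec _ _ _ _ H _ _ H0 B). lra.
Qed.

Lemma Sh_le a alpha f x : x <= salpha a f alpha ->
  Sh a f alpha x = alpha * x + Falpha f alpha (tau a f alpha x).
Proof. intro Hx. unfold Sh. destruct (Rle_dec x (salpha a f alpha)); [reflexivity|lra]. Qed.

Lemma Sh_gt a alpha f x : salpha a f alpha < x -> Sh a f alpha x = x.
Proof. intro Hx. unfold Sh. destruct (Rle_dec x (salpha a f alpha)); [lra|reflexivity]. Qed.

Lemma core a alpha f f' (H : Hyp a alpha f f') x :
  xminus a f alpha < x -> x <= salpha a f alpha ->
  (ualpha a f alpha < x -> Sh a f alpha x < f x) /\
  (x < ualpha a f alpha -> f x < Sh a f alpha x).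
Proof.
  intros H1 H2. pose proof H as H0. hyp H0.
  destruct (u_spec _ _ _ _ H) as [[U1 U2] U3].
  destruct (tau_spec _ _ _ _ H x ltac:(lra) H2) as [[A B] C].
  pose proof (tau_gt _ _ _ _ H x H1 H2) as A'.
  destruct (tau_spec _ _ _ _ H (ualpha a f alpha) ltac:(lra) ltac:(lra)) as [[Au Bu] Cu].
  set (y := tau a f alpha x) in *. set (z := phi a f alpha y).
  destruct (phi_spec _ _ _ _ H y) as [Z1 Z2]. fold z in Z1, Z2.
  pose proof (phi_lt_a _ _ _ _ H y A' B) as Za. fold z in Za.
  assert (Hyx : y < x).
  { unfold Dm, delta in C. fold z in C. rewrite <- Z2 in C.
    pose proof (F_gt _ _ _ _ H z Za).
    set (w := Falpha f alpha z / (1 - alpha)) in C.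
    assert (Ew : Falpha f alpha z = (1 - alpha) * w) by (unfold w; field; lra).
    assert (z < w) by (apply (Rmult_lt_reg_l (1 - alpha)); lra). lra. }
  rewrite (Sh_le _ _ _ x H2). fold y.
  assert (Efx : f x = alpha * x + Falpha f alpha x) by (unfold Falpha; ring).
  rewrite Efx. split; intro L.
  - pose proof (tau_mono _ _ _ _ H (ualpha a f alpha) x ltac:(lra) L H2) as T. fold y in T.
    pose proof (phi_dec _ _ _ _ H _ _ T B) as P. fold z in P. rewrite U3 in P.
    assert (Hzx : z < x) by lra.
    pose proof (F_inc _ _ _ _ H z x Z1 Hzx). lra.
  - pose proof (tau_mono _ _ _ _ H x (ualpha a f alpha) ltac:(lra) L ltac:(lra)) as T. fold y in T.
    pose proof (phi_dec _ _ _ _ H _ _ T Bu) as P. fold z in P. rewrite U3 in P.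
    destruct (Rle_lt_dec x (xplus a f alpha)) as [Lx|Lx].
    + pose proof (F_dec _ _ _ _ H y x Hyx Lx). lra.
    + pose proof (F_inc _ _ _ _ H x z ltac:(lra) ltac:(lra)). lra.
Qed.

Theorem proposition3p28 (a alpha : R) (f : R -> R) :
  0 < a -> 0 <= alpha < 1 -> Ca a f ->
  (forall x, xminus a f alpha < x < a ->
     (Sh a f alpha x < f x <-> ualpha a f alpha < x < a)) /\
  (xminus a f alpha < ualpha a f alpha < a /\
   Sh a f alpha (ualpha a f alpha) = f (ualpha a f alpha) /\
   forall x, xminus a f alpha < x < a -> Sh a f alpha x = f x ->
     x = ualpha a f alpha).
Proof.
  intros Ha Hal HCa. destruct HCa as [[f' [Hd Hc]] [_ [Hout Hconv]]].
  assert (H : Hyp a alpha f f') by (unfold Hyp; repeat split; auto; lra).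
  destruct (u_spec _ _ _ _ H) as [[U1 U2] U3].
  destruct (s_prop _ _ _ _ H) as [_ [Hs1 Hs2]].
  assert (Hsu : Sh a f alpha (ualpha a f alpha) = f (ualpha a f alpha)).
  { rewrite (Sh_le a alpha f (ualpha a f alpha) ltac:(lra)).
    destruct (phi_spec _ _ _ _ H (tau a f alpha (ualpha a f alpha))) as [_ E].
    rewrite U3 in E. rewrite <- E. unfold Falpha. ring. }
  assert (Gt : forall x, salpha a f alpha < x < a -> Sh a f alpha x < f x).
  { intros x Hx. rewrite (Sh_gt a alpha f x ltac:(lra)). apply (f_gt _ _ _ _ H); lra. }
  split.
  - intros x Hx. split.
    + intro L. split; [|lra].
      destruct (Rle_lt_dec x (salpha a f alpha)) as [Lx|Lx]; [|lra].
      destruct (core _ _ _ _ H x ltac:(lra) Lx) as [_ C2].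
      destruct (Rtotal_order (ualpha a f alpha) x) as [T|[T|T]]; auto.
      * subst x. lra.
      * pose proof (C2 T). lra.
    + intro L. destruct (Rle_lt_dec x (salpha a f alpha)) as [Lx|Lx].
      * destruct (core _ _ _ _ H x ltac:(lra) Lx) as [C1 _]. apply C1; lra.
      * apply Gt; lra.
  - split; [lra|]. split; [exact Hsu|].
    intros x Hx E.
    destruct (Rle_lt_dec x (salpha a f alpha)) as [Lx|Lx].
    + destruct (core _ _ _ _ H x ltac:(lra) Lx) as [C1 C2].
      destruct (Rtotal_order (ualpha a f alpha) x) as [T|[T|T]]; auto.
      * pose proof (C1 T). lra.
      * pose proof (C2 T). lra.
    + pose proof (Gt x ltac:(lra)). lra.
Qed.
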